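(* Let $\mathcal{G}=(\mathcal{N},\mathcal{E})$ be a finite, undirected, connected graph, let $\mathcal{M}_1,\dots,\mathcal{M}_m$ be a non-overlapping partition of $\mathcal{N}$ into nonempty sets, let $h\ge 1$ and let real numbers $a_{i,\ell}$ ($i\in\mathcal{N}$, $\ell=1,\dots,h$) be given. Run the coalition formation procedure described in the context for $m-1$ iterations. Then either every resulting coalition $\mathcal{C}_p^{(m-1)}$, $p=1,\dots,m$, is self-sufficient, or $\mathcal{C}_p^{(m-1)}=\mathcal{N}$ for all $p=1,\dots,m$.
   Context: For $S\subseteq\mathcal{N}$ and $\ell\in\{1,\dots,h\}$ define the local imbalance $\Delta_{S,\ell}=\sum_{i\in S}a_{i,\ell}$ (in the application, $a_{i,\ell}=-\bar u^{\mathrm g}_i+\hat d_{i,\ell}+\bar w_i^{\mathrm d}$: maximum dispatchable generation subtracted from worst-case net load). $S$ is self-sufficient if $\Delta_{S,\ell}\le 0$ for all $\ell=1,\dots,h$. Coalition formation procedure: initially $\mathcal{C}_p^{(0)}=\mathcal{M}_p$ for each $p$. At every iteration the coalitions form a partition of $\mathcal{N}$ into unions of the $\mathcal{M}_p$ (each $\mathcal{M}_p$ belongs to the coalition $\mathcal{C}_p^{(r)}$, and two indices $p,q$ either have identical or disjoint coalitions). At iteration $r$ ($0\le r<m-1$): if all coalitions are self-sufficient, nothing changes. Otherwise, each coalition $\mathcal{C}$ that is not self-sufficient and has an adjacent coalition (a distinct coalition containing a node adjacent in $\mathcal{G}$ to a node of $\mathcal{C}$) requests a merger; an adjacent coalition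 $\mathcal{C}'$ that is not already engaged with another coalition in this iteration responds with $J^{\mathrm{cim}}=\sum_{\ell=1}^h\max(0,\Delta_{\mathcal{C}',\ell}+\Delta_{\mathcal{C},\ell})$ (an engaged one responds $+\infty$), and $\mathcal{C}$ merges (takes the union) with a responding adjacent coalition minimizing $J^{\mathrm{cim}}$ among finite values, all members of both coalitions updating their coalition to the union. Each coalition participates in at most one merger per iteration, and in every iteration in which some coalition is not self-sufficient and has an adjacent coalition, at least one merger takes place. *)

(* Defs.v *)
From HB Require Import structures.
From mathcomp Require Import all_boot all_order all_algebra.
From mathcomp Require Import reals.
Set Implicit Arguments. Unset Strict Implicit. Unset Printing Implicit Defensive.
Import Order.TTheory GRing.Theory Num.Theory.
Local Open Scope ring_scope.

Section CIM.
Variables (R : realType) (N : finType) (h : nat) (a : N -> 'I_h -> R) (e : rel N).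

Definition imbalance (S : {set N}) (l : 'I_h) : R := \sum_(i in S) a i l.

Definition self_sufficient (S : {set N}) : bool := [forall l, imbalance S l <= 0].

Definition Jcim (C C' : {set N}) : R :=
  \sum_(l < h) Num.max 0 (imbalance C' l + imbalance C l).

Definition adjacent_coal (A B : {set N}) : bool :=
  (A != B) && [exists x in A, exists y in B, e x y].

Variable m : nat.

Definition is_coal (C : 'I_m -> {set N}) (X : {set N}) : bool := [exists p, C p == X].

Definition engaged (s : seq ({set N} * {set N})) (X : {set N}) : bool :=
  has (fun AB => (AB.1 == X) || (AB.2 == X)) s.

(* ms is the (ordered) list of mergers (requester, partner) performed in one
   iteration from the coalition state C *)
Definition valid_mergers (C : 'I_m -> {set N}) (ms : seq ({set N} * {set N})) : Prop :=
  (forall k, (k < size ms)%N ->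
     let A := (nth (set0, set0) ms k).1 in
     let B := (nth (set0, set0) ms k).2 in
     let pre := take k ms in
     [/\ is_coal C A, is_coal C B, ~~ self_sufficient A, adjacent_coal A B
         & ~~ engaged pre A] /\ ~~ engaged pre B /\
         (forall B', is_coal C B' -> adjacent_coal A B' -> ~~ engaged pre B' ->
           Jcim A B <= Jcim A B'))
  /\
  (forall A B, is_coal C A -> is_coal C B -> ~~ self_sufficient A ->
     adjacent_coal A B -> ~~ engaged ms A -> ~~ engaged ms B -> False)
  /\
  ((exists A B, [/\ is_coal C A, is_coal C B, ~~ self_sufficient A & adjacent_coal A B]) ->
     ms <> [::]).

Definition cim_step (C C' : 'I_m -> {set N}) : Prop :=
  ((forall p, self_sufficient (C p)) -> C' = C) /\
  exists ms, valid_mergers C ms /\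
    forall p,
      (forall AB, AB \in ms -> (AB.1 == C p) || (AB.2 == C p) -> C' p = AB.1 :|: AB.2)
      /\ (~~ engaged ms (C p) -> C' p = C p).

End CIM.

(* Main.v *)
Require Import Defs.
From HB Require Import structures.
From mathcomp Require Import all_boot all_order all_algebra.
From mathcomp Require Import reals.
From mathcomp Require Import zify.
Import Order.TTheory GRing.Theory Num.Theory.
Local Open Scope ring_scope.

Section Aux.
Variables (R : realType) (N : finType) (h : nat) (a : N -> 'I_h -> R) (e : rel N) (m : nat).

Definition coals (C : 'I_m -> {set N}) : {set {set N}} := C @: setT.

Definition stepspec (C C' : 'I_m -> {set N}) (ms : seq ({set N} * {set N})) :=
  forall p,
      (forall AB, AB \in ms -> (AB.1 == C p) || (AB.2 == C p) -> C' p = AB.1 :|: AB.2)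
      /\ (~~ engaged ms (C p) -> C' p = C p).

Lemma step_sub C C' ms : stepspec C C' ms -> forall p, C p \subset C' p.
Proof.
move=> spec p; case E: (engaged ms (C p)).
  move/hasP: E => [AB inAB hAB]; rewrite ((spec p).1 AB inAB hAB).
  by case/orP: hAB => /eqP <-; [apply: subsetUl | apply: subsetUr].
by rewrite (spec p).2 ?E.
Qed.

Lemma merge_dec C C' ms : valid_mergers a e C ms -> stepspec C C' ms ->
  ms != [::] -> (#|coals C'| < #|coals C|)%N.
Proof.
move=> vm spec nms.
pose f X := if [pick p | C p == X] is Some p then C' p else X.
have key : forall p q, C p = C q -> C' p = C' q.
  move=> p q Hpq; case E: (engaged ms (C p)).
    move/hasP: (E) => [AB inAB hAB].
    rewrite ((spec p).1 AB inAB hAB) ((spec q).1 AB inAB) //.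
    by rewrite -Hpq.
  rewrite (spec p).2 ?E // (spec q).2 -?Hpq ?E //.
have fC : forall p, f (C p) = C' p.
  move=> p; rewrite /f; case: pickP => [q /eqP Hq | H].
    by apply: key.
  by have := H p; rewrite eqxx.
have eqI : coals C' = f @: coals C.
  rewrite /coals -imset_comp; apply: eq_imset => p /=; by rewrite fC.
rewrite eqI ltn_neqAle leq_imset_card andbT.
apply/negP => /imset_injP inj.
case: ms vm spec nms => [//|[A B] ms] vm spec _.
have [[HA HB _ Hadj _] _] := vm.1 0%N isT.
move: HA HB Hadj => /= /existsP [pA /eqP EA] /existsP [pB /eqP EB] /andP [neq _].
have fA : f A = A :|: B.
  rewrite -{1}EA fC ((spec pA).1 (A, B)) ?mem_head //=; by rewrite EA eqxx.
have fB : f B = A :|: B.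
  rewrite -{1}EB fC ((spec pB).1 (A, B)) ?mem_head //=; by rewrite EB eqxx orbT.
have : A = B.
  apply: inj; first by rewrite -EA imset_f ?in_setT.
    by rewrite -EB imset_f ?in_setT.
  by rewrite fA fB.
by move/eqP; rewrite (negbTE neq).
Qed.

Lemma boundary (S : {set N}) x z : (forall x y, connect e x y) ->
  x \in S -> z \notin S -> exists x' y', [/\ x' \in S, y' \notin S & e x' y'].
Proof.
move=> conn Sx zS; move: (conn x z) => /connectP [p pth Ez].
elim: p x pth Sx Ez => [|y p IH] x /=.
  by move=> _ Sx Ez; rewrite Ez Sx in zS.
move=> /andP [exy pth] Sx Ez.
case Sy: (y \in S); first exact: (IH y pth Sy Ez).
by exists x, y; rewrite Sy.
Qed.

End Aux.

Theorem proposition2 (R : realType) (N : finType) (e : rel N) (m : nat)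
    (M : 'I_m -> {set N}) (h : nat) (a : N -> 'I_h -> R)
    (C : nat -> 'I_m -> {set N}) :
  symmetric e ->
  (forall x y : N, connect e x y) ->
  (forall p, M p != set0) ->
  (forall p q, p != q -> [disjoint M p & M q]) ->
  \bigcup_(p < m) M p = [set: N] ->
  (1 <= h)%N ->
  C 0%N = M ->
  (forall r, (r < m.-1)%N -> cim_step a e (C r) (C r.+1)) ->
  (forall p, self_sufficient a (C m.-1 p)) \/ (forall p, C m.-1 p = [set: N]).
Proof.
move=> esymm conn Mne _ Mcov _ C0 steps.
have sub : forall r, (r <= m.-1)%N -> forall p, M p \subset C r p.
  elim=> [|r IH] Hr p; first by rewrite C0.
  have [_ [ms [_ spec]]] := steps r Hr.
  apply: subset_trans (IH (ltnW Hr) p) _; exact: (step_sub _ _ _ _ _ spec p).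
have cov : forall r, (r <= m.-1)%N -> forall x, exists q, x \in C r q.
  move=> r Hr x; have : x \in \bigcup_(p < m) M p by rewrite Mcov in_setT.
  move/bigcupP => [q _ xq]; exists q; exact: (subsetP (sub r Hr q)).
have Q : forall r, (r <= m.-1)%N ->
  (forall p, self_sufficient a (C r p)) \/ (forall p, C r p = [set: N]) \/
  (#|coals N m (C r)| + r <= m)%N.
  elim=> [|r IH] Hr.
    right; right; rewrite C0 addn0 /coals.
    by apply: leq_trans (leq_imset_card _ _) _; rewrite cardsT card_ord.
  have [ssI [ms [vm spec]]] := steps r Hr.
  have stepS := step_sub _ _ _ _ _ spec.
  case: (IH (ltnW Hr)) => [allss | [allT | card]].
  - by left; rewrite (ssI allss).
  - right; left => p; apply/eqP; rewrite eqEsubset subsetT /= -(allT p); exact: stepS.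
  have [allss | nss] := boolP [forall p, self_sufficient a (C r p)].
    by left; rewrite ssI => [p|p]; apply: (forallP allss).
  move/forallPn: nss => [p np].
  have [allT | nT] := boolP [forall q, C r q == [set: N]].
    right; left => q; apply/eqP; rewrite eqEsubset subsetT /=.
    by rewrite -(eqP (forallP allT q)); exact: stepS.
  move/forallPn: nT => [q nq].
  have nonemp : forall s, exists x, x \in C r s.
    move=> s; have /set0Pn [x xM] := Mne s.
    by exists x; exact: (subsetP (sub r (ltnW Hr) s)).
  have notT : forall s, C r s != [set: N] -> exists z, z \notin C r s.
    move=> s ns; have : ~~ ([set: N] \subset C r s) by rewrite subTset.
    by move/subsetPn => [z _ zn]; exists z.
  have adj : exists A B, [/\ is_coal (C r) A, is_coal (C r) B, ~~ self_sufficient a A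
                          & adjacent_coal e A B].
    have coalP : forall s, is_coal (C r) (C r s) by move=> s; apply/existsP; exists s.
    have [Ep | nEp] := boolP (C r p == [set: N]).
      have [x xq] := nonemp q; have [z zq] := notT q nq.
      have [x' [y' [x'q y'q exy]]] := boundary _ _ _ _ _ conn xq zq.
      exists (C r p), (C r q); split => //.
      rewrite /adjacent_coal (eqP Ep) eq_sym nq /=.
      apply/existsP; exists y'; rewrite in_setT /=; apply/existsP; exists x'.
      by rewrite x'q esymm.
    have [x xp] := nonemp p; have [z zp] := notT p nEp.
    have [x' [y' [x'p y'p exy]]] := boundary _ _ _ _ _ conn xp zp.
    have [q' y'q'] := cov r (ltnW Hr) y'.
    exists (C r p), (C r q'); split => //.
    rewrite /adjacent_coal; apply/andP; split.
      by apply/eqP => E; rewrite E y'q' in y'p.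
    by apply/existsP; exists x'; rewrite x'p /=; apply/existsP; exists y'; rewrite y'q' exy.
  have nms : ms != [::] by apply/eqP; exact: (vm.2.2 adj).
  have := merge_dec _ _ _ _ _ _ _ _ _ vm spec nms; right; right; lia.
case: m M C Mne Mcov C0 steps sub cov Q => [|m'] M C Mne Mcov C0 steps sub cov Q.
  by left; case.
have := Q m'.+1.-1 (leqnn _); case => [|[|card]]; [by left | by right |].
right => p.
have le1 : (#|coals N m'.+1 (C m'.+1.-1)| <= 1)%N by move: card => /=; lia.
have Pin : forall s, C m'.+1.-1 s \in coals N m'.+1 (C m'.+1.-1) by move=> s; rewrite imset_f ?in_setT.
have eqC : forall s, C m'.+1.-1 s = C m'.+1.-1 p.
  move=> s; have := (card_le1P le1) _ (Pin p) (C m'.+1.-1 s).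
  by rewrite Pin => /esym /eqP.
apply/eqP; rewrite eqEsubset subsetT /= -Mcov; apply/bigcupsP => s _.
by rewrite -(eqC s); exact: sub.
Qed.
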